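(* Let $S$ be a group and $L, L'$ subgroups of $S$, and let $k$ be a positive integer. Write $A^{\times k}$ for the direct product of $k$ copies of a group $A$, so that $L^{\times k}$ and $L'^{\times k}$ are subgroups of $S^{\times k}$. (1) If $(S,L,L')$ is a Gassman-Sunada triple with property FF, then $(S^{\times k},L^{\times k},L'^{\times k})$ is a Gassman-Sunada triple with property FF. (2) If $(S,L,L')$ is an EC-triple with property FF, then $(S^{\times k},L^{\times k},L'^{\times k})$ is an EC-triple with property FF.
   Context: A triple $(G,H,H')$ with $H,H'\le G$ is a Gassman-Sunada triple (almost conjugate, AC) if there is a bijection $B:H\to H'$ such that $B(h)$ is conjugate to $h$ in $G$ for every $h\in H$ (equivalently, $|g^G\cap H|=|g^G\cap H'|$ for all $g\in G$). It is an EC-triple ($H,H'$ elementwise conjugate) if every element of $H$ is conjugate in $G$ to some element of $H'$ and every element of $H'$ is conjugate in $G$ to some element of $H$. The triple has property FF if no nontrivial normal subgroup of $G$ is contained in $H$, and no nontrivial normal subgroup of $G$ is contained in $H'$ (i.e. the left-translation actions of $G$ on $G/H$ and on $G/H'$ are faithful). *)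

(* Defs.v *)
From HB Require Import structures.
From mathcomp Require Import all_boot all_fingroup.
Set Implicit Arguments. Unset Strict Implicit. Unset Printing Implicit Defensive.
Local Open Scope group_scope.

Definition GS_triple (gT : finGroupType) (G H H' : {set gT}) : Prop :=
  H \subset G /\ H' \subset G /\
  exists B : gT -> gT,
    [/\ {in H &, injective B}, B @: H = H' & {in H, forall h, B h \in h ^: G}].

Definition EC_triple (gT : finGroupType) (G H H' : {set gT}) : Prop :=
  H \subset G /\ H' \subset G /\
  (forall h, h \in H -> exists2 h', h' \in H' & h' \in h ^: G) /\
  (forall h', h' \in H' -> exists2 h, h \in H & h \in h' ^: G).

Definition FF_prop (gT : finGroupType) (G H H' : {set gT}) : Prop :=
  forall N : {group gT}, N <| G -> (N \subset H) || (N \subset H') -> N = 1 :> {set gT}.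

(* k-fold direct product S^{x k}: the group {dffun 'I_k -> gT} with pointwise
   multiplication (gproduct.v), and A^{x k} = setXn of k copies of A. *)
Notation powT gT k := {dffun forall i : 'I_k, gT}.
Definition setpow (gT : finGroupType) (k : nat) (A : {set gT}) : {set powT gT k} :=
  setXn (fun _ : 'I_k => A).

(* Main.v *)
Require Import Defs.
From HB Require Import structures.
From mathcomp Require Import all_boot all_fingroup.
Set Implicit Arguments. Unset Strict Implicit. Unset Printing Implicit Defensive.
Local Open Scope group_scope.

Section Aux.
Variables (gT : finGroupType) (k : nat).

Lemma conjg_ffun (f s : powT gT k) i : (f ^ s) i = f i ^ s i.
Proof. by rewrite /conjg !mulg_ffun invg_ffun. Qed.

Lemma in_pow (A : {set gT}) (f : powT gT k) : (f \in setpow k A) = [forall i, f i \in A].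
Proof. by rewrite /setpow in_setXn. Qed.

Lemma powP (A : {set gT}) (f : powT gT k) : reflect (forall i, f i \in A) (f \in setpow k A).
Proof. exact: setXnP. Qed.

Lemma pow_sub (A B : {set gT}) : A \subset B -> setpow k A \subset setpow k B.
Proof.
move=> sAB; apply/subsetP => f /powP fA; apply/powP => i; exact: (subsetP sAB).
Qed.

Lemma choose_pow (P : 'I_k -> gT -> bool) :
  (forall i, exists x, P i x) -> exists g : powT gT k, forall i, P i (g i).
Proof.
move=> H; exists [ffun i => odflt 1 [pick x | P i x]] => i; rewrite ffunE.
case: pickP => [x //|]; case: (H i) => x Px /(_ x); by rewrite Px.
Qed.

Lemma conj_pow (S : {group gT}) (f g : powT gT k) :
  (forall i, g i \in f i ^: S) -> g \in f ^: setpow k S.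
Proof.
move=> H.
have [|s Hs] := @choose_pow (fun i x => (x \in S) && (g i == f i ^ x)).
  by move=> i; case/imsetP: (H i) => x xS ->; exists x; rewrite xS eqxx.
apply/imsetP; exists s; first by apply/powP => i; case/andP: (Hs i).
by apply/ffunP => i; rewrite conjg_ffun; case/andP: (Hs i) => _ /eqP.
Qed.

Lemma FF_pow (S L L' : {group gT}) :
  FF_prop S L L' -> FF_prop (setpow k S) (setpow k L) (setpow k L').
Proof.
move=> FF N nN sub; apply/trivgP/subsetP => f fN; apply/set1P/ffunP => i.
rewrite oneg_ffun.
pose Ni := (dffun_morphism (fun _ : 'I_k => gT) i @* N)%G.
have nNi : Ni <| S.
  have := morphim_normal (dffun_morphism (fun _ : 'I_k => gT) i) nN.
  by rewrite /setpow (morphim_dffunXn i (fun _ => S)).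
have sNi : (Ni \subset L) || (Ni \subset L').
  case/orP: sub => s; apply/orP; [left|right];
  have := morphimS (dffun_morphism (fun _ : 'I_k => gT) i) s;
  by rewrite /setpow ?(morphim_dffunXn i (fun _ => L)) ?(morphim_dffunXn i (fun _ => L')).
have := FF Ni nNi sNi => Ni1.
have : f i \in Ni by apply: (mem_morphim (dffun_morphism (fun _ : 'I_k => gT) i)); rewrite ?inE.
by rewrite /= Ni1 => /set1P.
Qed.

End Aux.

Theorem mainTheorem1 (gT : finGroupType) (S L L' : {group gT}) (k : nat) :
  0 < k ->
  (GS_triple S L L' /\ FF_prop S L L' ->
     GS_triple (setpow k S) (setpow k L) (setpow k L') /\
     FF_prop (setpow k S) (setpow k L) (setpow k L')) /\
  (EC_triple S L L' /\ FF_prop S L L' ->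
     EC_triple (setpow k S) (setpow k L) (setpow k L') /\
     FF_prop (setpow k S) (setpow k L) (setpow k L')).
Proof.
move=> _; split.
  move=> [[sLS [sL'S [B [injB imB conjB]]]] FF]; split; last exact: FF_pow.
  split; first exact: pow_sub.
  split; first exact: pow_sub.
  exists (fun f : powT gT k => [ffun i => B (f i)]); split.
  - move=> f g /powP fL /powP gL /ffunP e; apply/ffunP => i.
    by apply: injB => //; have := e i; rewrite !ffunE.
  - apply/setP => g; apply/imsetP/powP => [[f /powP fL ->] i|gL].
      by rewrite ffunE -imB; apply: imset_f.
    have [|f Hf] := @choose_pow gT k (fun i x => (x \in L) && (g i == B x)).
      move=> i; have := gL i; rewrite -imB => /imsetP [x xL ->].
      by exists x; rewrite xL eqxx.
    exists f; first by apply/powP => i; case/andP: (Hf i).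
    by apply/ffunP => i; rewrite ffunE; case/andP: (Hf i) => _ /eqP.
  - move=> f /powP fL; apply: conj_pow => i; rewrite ffunE; exact: conjB.
move=> [[sLS [sL'S [H1 H2]]] FF]; split; last exact: FF_pow.
split; first exact: pow_sub.
split; first exact: pow_sub.
split.
  move=> f /powP fL.
  have [|g Hg] := @choose_pow gT k (fun i x => (x \in L') && (x \in f i ^: S)).
    by move=> i; case: (H1 _ (fL i)) => x xL xc; exists x; rewrite xL xc.
  exists g; first by apply/powP => i; case/andP: (Hg i).
  by apply: conj_pow => i; case/andP: (Hg i).
move=> f /powP fL.
have [|g Hg] := @choose_pow gT k (fun i x => (x \in L) && (x \in f i ^: S)).
  by move=> i; case: (H2 _ (fL i)) => x xL xc; exists x; rewrite xL xc.
exists g; first by apply/powP => i; case/andP: (Hg i).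
by apply: conj_pow => i; case/andP: (Hg i).
Qed.
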